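(* For each SES $\sigma=(E,\#,\to,\triangleright)$ there is an RCES $\rho$ (over the same event set $E$) such that $\sigma$ and $\rho$ are transition equivalent.
   Context: SES: $\sigma=(E,\#,\to,\triangleright)$ with $\#\subseteq E^2$ irreflexive and symmetric, $\to\subseteq E^2$ an arbitrary binary relation, $\triangleright\subseteq E^3$ with $(c,d,t)\in\triangleright$ implying $c\to t$. $\mathrm{ic}(e)=\{e'\mid e'\to e\}$, $\mathrm{dc}(H,e)=\{e'\mid\exists d\in H.(e',d,e)\in\triangleright\}$. SES transitions: for $X,Y\subseteq E$, $X\to_s Y$ iff $X\subseteq Y$, $\neg(e\#e')$ for all $e,e'\in Y$, and $\mathrm{ic}(e)\setminus\mathrm{dc}(X,e)\subseteq X$ for all $e\in Y\setminus X$. Event structure for resolvable conflict (RCES): a pair $\rho=(E,\vdash)$ with $\vdash\subseteq 2^E\times 2^E$. For $X,Y\subseteq E$, $X\to_{rc}Y$ iff $X\subseteq Y$ and for every $Z\subseteq Y$ there is $W\subseteq X$ with $W\vdash Z$. For an event structure $\mu$ with transition relation $\to_\mu$ on subsets of its events, $\mathcal{C}(\mu)$ is the set of sets reachable from $\emptyset$ by finitely many $\to_\mu$-steps. Two such structures $\mu,\mu'$ are transition equivalent iff $\mathcal{C}(\mu)=\mathcal{C}(\mu')$ and for all $X,Y\in\mathcal{C}(\mu)$: $X\to_\mu Y$ iff $X\to_{\mu'}Y$. *)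

(* Defs.v *)
Set Implicit Arguments.

Definition eset (E : Type) := E -> Prop.
Definition subset {E : Type} (X Y : eset E) : Prop := forall e, X e -> Y e.
Definition emptyset {E : Type} : eset E := fun _ => False.

Record SES (E : Type) := mkSES {
  conflict : E -> E -> Prop;
  enab : E -> E -> Prop;                    (* enab e' e  means  e' -> e *)
  shrink : E -> E -> E -> Prop;             (* shrink c d t  means (c,d,t) in |> *)
  conflict_irrefl : forall e, ~ conflict e e;
  conflict_sym : forall e e', conflict e e' -> conflict e' e;
  shrink_enab : forall c d t, shrink c d t -> enab c t
}.

Definition ic {E} (s : SES E) (e : E) : eset E := fun e' => enab s e' e.
Definition dc {E} (s : SES E) (H : eset E) (e : E) : eset E :=
  fun e' => exists d, H d /\ shrink s e' d e.

Definition ses_step {E} (s : SES E) (X Y : eset E) : Prop :=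
  subset X Y /\
  (forall e e', Y e -> Y e' -> ~ conflict s e e') /\
  (forall e, Y e -> ~ X e ->
     forall e', ic s e e' -> ~ dc s X e e' -> X e').

Definition RCES (E : Type) := eset E -> eset E -> Prop.

Definition rc_step {E} (r : RCES E) (X Y : eset E) : Prop :=
  subset X Y /\
  (forall Z, subset Z Y -> exists W, subset W X /\ r W Z).

Inductive reachable {E} (step : eset E -> eset E -> Prop) : eset E -> Prop :=
| reach_empty : reachable step emptyset
| reach_step : forall X Y, reachable step X -> step X Y -> reachable step Y.

Definition transition_equivalent {E}
  (step1 step2 : eset E -> eset E -> Prop) : Prop :=
  (forall X, reachable step1 X <-> reachable step2 X) /\
  (forall X Y, reachable step1 X -> reachable step1 Y ->
     (step1 X Y <-> step2 X Y)).

(* Main.v *)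
Require Import Defs.

Lemma steps_eq (E : Type) (sigma : SES E) :
  let rho : RCES E := fun W Z => exists Y, subset Z Y /\ ses_step sigma W Y in
  forall X Y, ses_step sigma X Y <-> rc_step rho X Y.
Proof.
  intros rho X Y; split.
  - intros H. split; [exact (proj1 H)|].
    intros Z HZ. exists X. split; [intros e h; exact h|]. exists Y. split; assumption.
  - intros [HXY HZ]. destruct (HZ Y (fun e h => h)) as [W [HWX [Y' [HYY' [HWY' [Hc Hn]]]]]].
    split; [exact HXY|]. split.
    + intros e e' h1 h2. apply Hc; apply HYY'; assumption.
    + intros e HYe HnX e' Hic Hdc.
      apply HWX. apply (Hn e (HYY' e HYe)).
      * intro Hw. apply HnX. apply HWX. exact Hw.
      * exact Hic.
      * intros [d [Hd Hs]]. apply Hdc. exists d. split; [apply HWX; exact Hd| exact Hs].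
Qed.

Theorem lemma8 (E : Type) (sigma : SES E) :
  exists rho : RCES E,
    transition_equivalent (ses_step sigma) (rc_step rho).
Proof.
  pose proof (@steps_eq E sigma) as Heq. simpl in Heq.
  eexists. split.
  - intros X; split; intros H; induction H.
    + constructor.
    + eapply reach_step; [eassumption| apply Heq; assumption].
    + constructor.
    + eapply reach_step; [eassumption| apply Heq; assumption].
  - intros X Y _ _. apply Heq.
Qed.
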